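(* Let $G$ be an $\alpha_i$-metric graph ($i\ge 0$ an integer) and let $x,y$ be a pair of mutually distant vertices of $G$. Then $d(x,y)\ge 2rad(G)-4i-3$ and $d(x,y)\ge diam(G)-3i-2$. Furthermore, any middle vertex $z$ of a shortest path between $x$ and $y$ satisfies $e(z)\le\lceil d(x,y)/2\rceil+2i+1$.
   Context: All graphs are finite, connected, unweighted, undirected, simple; $d(u,v)$ is the shortest-path distance. $I(u,v)=\{x: d(u,x)+d(x,v)=d(u,v)\}$. A graph is $\alpha_i$-metric if for all vertices $u,v,w,x$: whenever $v\in I(u,w)$, $w\in I(v,x)$ and $v,w$ are adjacent, then $d(u,x)\ge d(u,v)+d(v,x)-i$. $e(v)=\max_u d(u,v)$, $rad(G)=\min_v e(v)$, $diam(G)=\max_v e(v)$. Vertices $x,y$ are mutually distant if $e(x)=e(y)=d(x,y)$. A middle vertex of a shortest $(x,y)$-path is a vertex $z$ on it with $\{d(x,z),d(y,z)\}=\{\lfloor d(x,y)/2\rfloor,\lceil d(x,y)/2\rceil\}$. *)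

(* Defs.v *)
From mathcomp Require Import all_boot.
Set Implicit Arguments. Unset Strict Implicit. Unset Printing Implicit Defensive.

Definition simple_graph (T : finType) (e : rel T) : Prop :=
  symmetric e /\ irreflexive e.

Definition walkn (T : finType) (e : rel T) (x y : T) (n : nat) : bool :=
  [exists p : n.-tuple T, path e x p && (last x p == y)].

Definition connected_graph (T : finType) (e : rel T) : Prop :=
  forall x y : T, exists p : seq T, path e x p /\ last x p = y.

(* shortest-path distance: least n (< #|T|) admitting a walk of length n;
   correct whenever the graph is connected *)
Definition dist (T : finType) (e : rel T) (x y : T) : nat :=
  find (walkn e x y) (iota 0 #|T|).

Definition in_interval (T : finType) (e : rel T) (u v x : T) : bool :=
  dist e u x + dist e x v == dist e u v.

Definition alpha_metric (T : finType) (e : rel T) (i : nat) : Prop :=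
  forall u v w x : T,
    in_interval e u w v -> in_interval e v x w -> e v w ->
    dist e u v + dist e v x <= dist e u x + i.

Definition ecc (T : finType) (e : rel T) (v : T) : nat :=
  \max_(u : T) dist e u v.

Definition diam (T : finType) (e : rel T) : nat :=
  \max_(v : T) ecc e v.

(* minimum of eccentricities; #|T| is an upper bound for every ecc,
   so it is a neutral starting value for a nonempty T *)
Definition rad (T : finType) (e : rel T) : nat :=
  \big[minn/#|T|]_(v : T) ecc e v.

Definition mutually_distant (T : finType) (e : rel T) (x y : T) : Prop :=
  ecc e x = dist e x y /\ ecc e y = dist e x y.

Definition shortest_path (T : finType) (e : rel T) (x y : T) (p : seq T) : Prop :=
  path e x p /\ last x p = y /\ size p = dist e x y.

Definition middle_vertex (T : finType) (e : rel T) (x y : T) (p : seq T) (z : T) : Prop :=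
  shortest_path e x y p /\ z \in x :: p /\
  ((dist e x z = (dist e x y)./2 /\ dist e y z = uphalf (dist e x y)) \/
   (dist e x z = uphalf (dist e x y) /\ dist e y z = (dist e x y)./2)).

(* Main.v *)
Require Import Defs.
From mathcomp Require Import all_boot.
From mathcomp Require Import zify.
Set Implicit Arguments. Unset Strict Implicit. Unset Printing Implicit Defensive.

Lemma walknP (T : finType) (e : rel T) x y n :
  reflect (exists p : seq T, [/\ size p = n, path e x p & last x p = y])
          (walkn e x y n).
Proof.
apply: (iffP existsP) => [[p /andP[hp /eqP hl]] | [p [hs hp hl]]].
  by exists (val p); split => //; rewrite size_tuple.
have hs' : size p == n by apply/eqP.
by exists (Tuple hs'); rewrite /= hp hl eqxx.
Qed.

Lemma dist_spec (T : finType) (e : rel T) x y :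
  connected_graph e -> dist e x y < #|T| /\ walkn e x y (dist e x y).
Proof.
move=> conn; have [p [hp hl]] := conn x y.
case: (shortenP hp) hl => p' hp' hu _ hl.
have hs : size p' < #|T|.
  by have := max_card (mem (x :: p')); rewrite (card_uniqP hu).
have hw : walkn e x y (size p') by apply/walknP; exists p'.
have hh : has (walkn e x y) (iota 0 #|T|).
  by apply/hasP; exists (size p') => //; rewrite mem_iota.
rewrite /dist; split; first by rewrite -[X in _ < X](size_iota 0 #|T|) -has_find.
have := nth_find 0 hh; rewrite nth_iota ?add0n //.
by rewrite -[X in _ < X](size_iota 0 #|T|) -has_find.
Qed.

Lemma dist_min (T : finType) (e : rel T) x y n :
  connected_graph e -> walkn e x y n -> dist e x y <= n.
Proof.
move=> conn hw; have [hlt _] := dist_spec x y conn.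
case: (ltnP n #|T|) => hn; last by apply: ltnW; apply: leq_trans hlt hn.
rewrite leqNgt; apply/negP => hf.
have := before_find 0 hf; rewrite nth_iota // add0n hw //.
Qed.

Lemma dist_walk (T : finType) (e : rel T) x y :
  connected_graph e ->
  exists p : seq T, [/\ size p = dist e x y, path e x p & last x p = y].
Proof. by move=> conn; have [_ /walknP] := dist_spec x y conn. Qed.

Lemma dist_le (T : finType) (e : rel T) x y (p : seq T) :
  connected_graph e -> path e x p -> last x p = y -> dist e x y <= size p.
Proof. by move=> conn hp hl; apply: dist_min => //; apply/walknP; exists p. Qed.

Lemma dist_xx (T : finType) (e : rel T) x : connected_graph e -> dist e x x = 0.
Proof. by move=> conn; apply/eqP; rewrite -leqn0; apply: (@dist_le _ _ _ _ [::]). Qed.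

Lemma dist0 (T : finType) (e : rel T) x y : connected_graph e -> dist e x y = 0 -> x = y.
Proof. by move=> conn h; have [[|a p] [hs hp hl]] := dist_walk x y conn; rewrite h in hs. Qed.

Lemma dist_tri (T : finType) (e : rel T) x y z :
  connected_graph e -> dist e x z <= dist e x y + dist e y z.
Proof.
move=> conn; have [p [hs hp hl]] := dist_walk x y conn.
have [q [hs' hq hl']] := dist_walk y z conn.
rewrite -hs -hs' -size_cat; apply: dist_le => //.
  by rewrite cat_path hp hl hq.
by rewrite last_cat hl.
Qed.

Lemma walk_rev (T : finType) (e : rel T) : symmetric e ->
  forall (p : seq T) x, path e x p ->
  exists q : seq T, [/\ size q = size p, path e (last x p) q & last (last x p) q = x].
Proof.
move=> sym; elim=> [|a p IH] x /=; first by move=> _; exists [::].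
case/andP=> hxa hp; have [q [hs hq hl]] := IH a hp.
exists (rcons q x); split; first by rewrite size_rcons hs.
  by rewrite rcons_path hq hl sym.
by rewrite last_rcons.
Qed.

Lemma dist_sym (T : finType) (e : rel T) x y :
  symmetric e -> connected_graph e -> dist e x y = dist e y x.
Proof.
move=> sym conn.
have H : forall a b, dist e a b <= dist e b a.
  move=> a b; have [p [hs hp hl]] := dist_walk b a conn.
  have [q [hs' hq hl']] := walk_rev sym hp.
  rewrite hl in hq hl'; rewrite -hs -hs'; exact: dist_le.
by apply/eqP; rewrite eqn_leq !H.
Qed.

Lemma dist_edge (T : finType) (e : rel T) x y :
  irreflexive e -> connected_graph e -> e x y -> dist e x y = 1.
Proof.
move=> irr conn hxy; apply/eqP; rewrite eqn_leq.
have -> : dist e x y <= 1 by apply: (@dist_le _ _ _ _ [:: y]) => //=; rewrite hxy.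
rewrite lt0n; apply/eqP => /(dist0 conn) exy; by rewrite exy irr in hxy.
Qed.

Lemma dist_step (T : finType) (e : rel T) x y n :
  connected_graph e -> dist e x y = n.+1 -> exists w, e x w /\ dist e w y = n.
Proof.
move=> conn hd; have [[|w p] [hs hp hl]] := dist_walk x y conn; rewrite hd // in hs.
case/andP: hp => hxw hp; exists w; split => //.
apply/eqP; rewrite eqn_leq; case: hs => hs; rewrite -hs dist_le //=.
have : dist e x y <= dist e x w + dist e w y by apply: dist_tri.
have : dist e x w <= 1 by apply: (@dist_le _ _ _ _ [:: w]) => //=; rewrite hxw.
rewrite hd; lia.
Qed.

Lemma dist_edge_le (T : finType) (e : rel T) x y :
  connected_graph e -> e x y -> dist e x y <= 1.
Proof. by move=> conn hxy; apply: (@dist_le _ _ _ _ [:: y]) => //=; rewrite hxy. Qed.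

Lemma alpha_use (T : finType) (e : rel T) i u v w x :
  alpha_metric e i -> dist e u v + dist e v w = dist e u w ->
  dist e v w + dist e w x = dist e v x -> e v w ->
  dist e u v + dist e v x <= dist e u x + i.
Proof. by move=> H h1 h2 h3; apply: (H u v w x) => //; rewrite /in_interval; apply/eqP. Qed.

Ltac symf sym conn a b := have := dist_sym a b sym conn.
Ltac trif conn a b c := have := dist_tri a b c conn.

Lemma slice_exists (T : finType) (e : rel T) x y a :
  symmetric e -> connected_graph e -> a <= dist e x y ->
  exists c, dist e x c = a /\ dist e c y = dist e x y - a.
Proof.
move=> sym conn; elim: a => [|a IH] ha.
  by exists x; rewrite dist_xx // subn0.
have [c [h1 h2]] := IH (ltnW ha).
have [w [hcw hw]] := @dist_step _ e c y (dist e x y - a.+1) conn ltac:(lia).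
exists w; split => //.
have := dist_edge_le conn hcw; trif conn x c w; trif conn x w y; lia.
Qed.

Lemma slice_min (T : finType) (e : rel T) i x y v :
  symmetric e -> irreflexive e -> connected_graph e -> alpha_metric e i ->
  forall m c, dist e c v = m -> dist e x c + dist e c y = dist e x y ->
  exists c', [/\ dist e x c' = dist e x c, dist e c' y = dist e c y &
    (dist e c' v + dist e x c <= dist e x v + i \/
     dist e c' v + dist e c y <= dist e y v + i)].
Proof.
move=> sym irr conn alph; elim=> [|m IH] c hm hc.
  have ecv := dist0 conn hm; subst v.
  exists c; split => //; left; rewrite hm; lia.
have [w [hcw hw]] := dist_step conn hm.
have hcw1 := dist_edge irr conn hcw.
symf sym conn c w; symf sym conn c y; symf sym conn w y.
trif conn x c w; trif conn x w c; trif conn y c w; trif conn y w c; trif conn x w y.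
move=> t1 t2 t3 t4 t5 s1 s2 s3.
case: (ltnP (dist e x c) (dist e x w)) => hx.
  have := alpha_use alph (u:=x) (v:=c) (w:=w) (x:=v) ltac:(lia) ltac:(lia) hcw.
  by move=> h; exists c; split => //; left; lia.
case: (ltnP (dist e y c) (dist e y w)) => hy.
  have := alpha_use alph (u:=y) (v:=c) (w:=w) (x:=v) ltac:(lia) ltac:(lia) hcw.
  by move=> h; exists c; split => //; right; lia.
have [c' [h1 h2 h3]] := IH w hw ltac:(lia).
exists c'; split; lia.
Qed.

Lemma slice_close (T : finType) (e : rel T) i x y :
  symmetric e -> irreflexive e -> connected_graph e -> alpha_metric e i ->
  forall n z c, dist e x z = n -> dist e x z + dist e z y = dist e x y ->
  dist e x c + dist e c y = dist e x y -> n <= dist e x c ->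
  dist e z c <= dist e x c - n + i + 1.
Proof.
move=> sym irr conn alph; elim=> [|n IH] z c hz hzI hcI hle.
  have exz := dist0 conn hz; subst z; lia.
rewrite leqNgt; apply/negP => hr.
have [x1 [hzx1 hx1]] := @dist_step _ e z x n conn ltac:(symf sym conn z x; lia).
have [c' [hcc' hc']] := @dist_step _ e c x (dist e x c).-1 conn ltac:(symf sym conn c x; lia).
have d1 := dist_edge irr conn hzx1; have d2 := dist_edge irr conn hcc'.
symf sym conn z x1; symf sym conn c c'; symf sym conn x1 x; symf sym conn c' x;
symf sym conn c z; symf sym conn c x1; symf sym conn c x; symf sym conn z x;
symf sym conn x1 c'; symf sym conn c' c; symf sym conn x1 z; symf sym conn c y.
move=> s1 s2 s3 s4 s5 s6 s7 s8 s9 s10 s11 s12.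
trif conn x x1 y; trif conn x1 z y; trif conn x c' y; trif conn c' c y.
trif conn c z x1; trif conn c x1 z; trif conn x1 c' c; trif conn x1 c c'.
move=> t1 t2 t3 t4 t5 t6 t7 t8.
have hA : dist e c x1 <> (dist e c z).+1.
  move=> h.
  have := alpha_use alph (u:=c) (v:=z) (w:=x1) (x:=x) ltac:(lia) ltac:(lia) hzx1.
  lia.
have hB : dist e c x1 <> (dist e c z).-1.
  move=> h.
  have := alpha_use alph (u:=c) (v:=x1) (w:=z) (x:=y) ltac:(lia) ltac:(lia)
    ltac:(by rewrite sym).
  lia.
have hC : dist e x1 c' <> (dist e c z).-1.
  move=> h.
  have := alpha_use alph (u:=x1) (v:=c') (w:=c) (x:=y) ltac:(lia) ltac:(lia)
    ltac:(by rewrite sym).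
  lia.
have := IH x1 c' ltac:(lia) ltac:(lia) ltac:(lia) ltac:(lia).
lia.
Qed.

Lemma bigmin_le (T : eqType) (F : T -> nat) N (r : seq T) z :
  z \in r -> \big[minn/N]_(v <- r) F v <= F z.
Proof.
elim: r => [|a r IH] //; rewrite inE big_cons => /predU1P[<-|hz].
  exact: geq_minl.
exact: leq_trans (geq_minr _ _) (IH hz).
Qed.

Theorem lemma6 (T : finType) (e : rel T) (i : nat) (x y : T) :
  simple_graph e -> connected_graph e -> alpha_metric e i ->
  mutually_distant e x y ->
  [/\ 2 * rad e <= dist e x y + 4 * i + 3,
      diam e <= dist e x y + 3 * i + 2 &
      forall (p : seq T) (z : T), middle_vertex e x y p z ->
        ecc e z <= uphalf (dist e x y) + 2 * i + 1].
Proof.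
move=> [sym irr] conn alph [ex ey].
have hx : forall u, dist e u x <= dist e x y.
  by move=> u; rewrite -ex /ecc; exact: (@leq_bigmax T (fun u0 => dist e u0 x) u).
have hy : forall u, dist e u y <= dist e x y.
  by move=> u; rewrite -ey /ecc; exact: (@leq_bigmax T (fun u0 => dist e u0 y) u).
have key : forall z u, dist e x z + dist e z y = dist e x y ->
    (dist e x z = (dist e x y)./2 \/ dist e x z = uphalf (dist e x y)) ->
    exists c, [/\ dist e x c = dist e x z, dist e c y = dist e z y &
                  dist e c u <= uphalf (dist e x y) + i].
  move=> z u hz hlev.
  have [c [h1 h2 h3]] := slice_min sym irr conn alph (erefl (dist e z u)) hz.
  exists c; split => //.
  have := hx u; have := hy u; symf sym conn u x; symf sym conn u y.
  lia.
have close : forall c c', dist e x c + dist e c y = dist e x y ->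
    dist e x c' + dist e c' y = dist e x y -> dist e x c = dist e x c' ->
    dist e c c' <= i + 1.
  move=> c c' h1 h2 h3.
  have := slice_close sym irr conn alph (erefl (dist e x c)) h1 h2 ltac:(lia).
  lia.
have mid : forall z, dist e x z + dist e z y = dist e x y ->
    (dist e x z = (dist e x y)./2 \/ dist e x z = uphalf (dist e x y)) ->
    ecc e z <= uphalf (dist e x y) + 2 * i + 1.
  move=> z hz hlev; apply/bigmax_leqP => u _.
  have [c [h1 h2 h3]] := key z u hz hlev.
  have := close c z ltac:(lia) hz h1.
  trif conn u c z; symf sym conn u c; lia.
have [z0 [hz0 hz0']] := @slice_exists _ e x y ((dist e x y)./2) sym conn ltac:(lia).
have hz0I : dist e x z0 + dist e z0 y = dist e x y by lia.
split.
- have := mid z0 hz0I (or_introl hz0).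
  have : rad e <= ecc e z0 by apply: bigmin_le; exact: mem_index_enum.
  lia.
- apply/bigmax_leqP => v _; apply/bigmax_leqP => u _.
  have [cu [h1 h2 h3]] := key z0 u hz0I (or_introl hz0).
  have [cv [h4 h5 h6]] := key z0 v hz0I (or_introl hz0).
  have := close cu cv ltac:(lia) ltac:(lia) ltac:(lia).
  trif conn u cu v; trif conn cu cv v; symf sym conn cu u; symf sym conn cv v.
  lia.
- move=> p z [_ [_ hcase]].
  symf sym conn y z => s.
  apply: mid; lia.
Qed.
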